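(* Let $\Lambda\subseteq\mathbb{R}^d$ be a $d$-dimensional lattice and $F,G\colon K\to\mathbb{R}$ two $\Lambda$-periodic filters on a $\Lambda$-periodic cell complex $K$. Then $d_I(\mathcal{M}(F,\Lambda),\mathcal{M}(G,\Lambda))\le\|F-G\|_\infty$, and hence $J([\mathcal{M}(F,\Lambda)],[\mathcal{M}(G,\Lambda)])\le\|F-G\|_\infty$, where $\|F-G\|_\infty=\sup_{\sigma\in K}|F(\sigma)-G(\sigma)|$.
   Context: A cell complex $K$ in $\mathbb{R}^d$ is a locally finite collection of cells (each homeomorphic to a closed ball, boundaries unions of lower-dimensional cells, intersections unions of shared faces). A lattice spanned by linearly independent $u_1,\dots,u_p\in\mathbb{R}^d$ is the set of their integer combinations, of dimension $p$; $\mathrm{vol}_p$ denotes the $p$-dimensional volume of its unit cell $\{\sum c_iu_i: c_i\in[0,1)\}$ ($\mathrm{vol}_0(\{0\})=1$). $K$ is $\Lambda$-periodic if $\sigma+u\in K$ for $\sigma\in K,u\in\Lambda$; a filter $F\colon K\to\mathbb{R}$ satisfies $F(\sigma)\le F(\tau)$ when $\sigma$ is a face of $\tau$, and is $\Lambda$-periodic if $F(\sigma+u)=F(\sigma)$. $K/\Lambda$ is the finite quotient complex on the torus $\mathbb{R}^d/\Lambda$ and $F/\Lambda$ the quotient filter. The merge tree of a filter on a complex $L$ is the quotient of $\{(x,s): x\in L_s\}$ ($L_s$ the sublevel set at $s$) by $(x,s)\sim(y,t)$ iff $s=t$ and $x,y$ lie in the same component of $L_s$, with quotient topology and height $h$ (the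 $s$-coordinate); points are identified with components of sublevel sets; $B$ covers $A$ if $h(A)\le h(B)$ and $A\subseteq B$. For a component $\Gamma$ of $(K/\Lambda)_t$, with $\phi\colon\mathbb{R}^d\to\mathbb{R}^d/\Lambda$ the projection, a shadow is a component of $\phi^{-1}(\Gamma)$ and the periodicity lattice is $\Lambda_\Gamma=\{u\in\Lambda:\gamma+u=\gamma\}$ for a shadow $\gamma$; with $p=\dim\Lambda_\Gamma$ and $\nu_q$ the volume of the unit $q$-ball, the shadow monomial is $\frac{\mathrm{vol}_p(\Lambda_\Gamma)}{\mathrm{vol}_d(\Lambda)}\nu_{d-p}R^{d-p}$. The periodic merge tree $\mathcal{M}(F,\Lambda)$ is the merge tree of $F/\Lambda$ with height $h$ and frequency function $\Phi$ assigning each point its shadow monomial. Monomials are ordered by $tR^a<sR^b$ iff $a<b$, or $a=b$ and $t<s$. Interleaving distance: continuous maps $\varphi\colon\mathcal{M}\to\mathcal{M}'$, $\psi\colon\mathcal{M}'\to\mathcal{M}$ between periodic merge trees (heights $h,h'$, frequencies $\Phi,\Phi'$) are $\varepsilon$-compatible if for all $\Gamma\in\mathcal{M}$, $\Gamma'\in\mathcal{M}'$: (i) $h'(\varphi(\Gamma))=h(\Gamma)+\varepsilon$, $h(\psi(\Gamma'))=h'(\Gamma')+\varepsilon$; (ii) $\psi(\varphi(\Gamma))$ covers $\Gamma$ and $\varphi(\psi(\Gamma'))$ covers $\Gamma'$; (iii) $\Phi'(\varphi(\Gamma))\le\Phi(\Gamma)$, $\Phi(\psi(\Gamma'))\le\Phi'(\Gamma')$.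 $d_I(\mathcal{M},\mathcal{M}')$ is the infimum of such $\varepsilon\ge0$. Splintering: $\mathcal{M}_\Gamma$ is the subtree of points covered by $\Gamma$. $\mathcal{M}'$ splinters $\mathcal{M}$ if there is a continuous surjection $\omega\colon\mathcal{M}'\to\mathcal{M}$ with $h\circ\omega=h'$ such that for every $\Gamma\in\mathcal{M}$ and all $A,B\in\omega^{-1}(\Gamma)$: $d_I(\mathcal{M}'_A,\mathcal{M}'_B)=0$, $\omega$ maps each of $\mathcal{M}'_A,\mathcal{M}'_B$ onto $\mathcal{M}_\Gamma$, and $\Phi'(A)=\Phi'(B)=\Phi(\Gamma)/|\omega^{-1}(\Gamma)|$. $\mathcal{M}\simeq\mathcal{N}$ if some periodic merge tree splinters both; $[\mathcal{M}]$ is the class. $J([\mathcal{M}],[\mathcal{M}'])=\inf\sum_{i=1}^k d_I(\mathcal{M}_i,\mathcal{M}_i')$ over finite sequences with $\mathcal{M}_1\in[\mathcal{M}]$, $\mathcal{M}_k'\in[\mathcal{M}']$, $\mathcal{M}_i'\simeq\mathcal{M}_{i+1}$. *)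

(* Defs.v *)
From HB Require Import structures.
From mathcomp Require Import all_boot all_order all_algebra generic_quotient.
From mathcomp Require Import all_classical all_reals all_analysis.
Unset Printing Implicit Defensive.
Import Order.TTheory GRing.Theory Num.Theory numFieldNormedType.Exports.
Local Open Scope classical_set_scope.
Local Open Scope ring_scope.

Section Lattice.
Context {R : realType} {p d : nat}.
Definition lat (B : 'M[R]_(p, d)) : set 'rV[R]_d :=
  [set v | exists z : 'I_p -> int, v = \sum_(i < p) (z i)%:~R *: row i B].

Lemma lat0 B : lat B 0.
Proof. by exists (fun=> 0); rewrite big1 // => i _; rewrite mulr0z scale0r. Qed.
Lemma latB B x y : lat B x -> lat B y -> lat B (x - y).
Proof.
move=> [z ->] [w ->]; exists (fun i => z i - w i).
rewrite -sumrB; apply: eq_bigr => i _; by rewrite mulrzBr scalerBl.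
Qed.
End Lattice.

Section Torus.
Context {R : realType} {d : nat} (B : 'M[R]_d).
Definition lat_rel : rel 'rV[R]_d := fun x y => `[< lat B (x - y) >].
Lemma lat_rel_refl : reflexive lat_rel.
Proof. by move=> x; apply/asboolP; rewrite subrr; exact: lat0. Qed.
Lemma lat_rel_sym : symmetric lat_rel.
Proof.
move=> x y; apply/asboolP/asboolP => h;
by rewrite -opprB -sub0r; apply: latB => //; exact: lat0.
Qed.
Lemma lat_rel_trans : transitive lat_rel.
Proof.
move=> y x z /asboolP hxy /asboolP hyz; apply/asboolP.
have -> : x - z = (x - y) - (z - y) by rewrite opprB addrA subrK.
by apply: latB => //; rewrite -opprB -sub0r; apply: latB => //; exact: lat0.
Qed.
Canonical lat_equiv := EquivRel lat_rel lat_rel_refl lat_rel_sym lat_rel_trans.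
Local Open Scope quotient_scope.
Definition torus := quotient_topology {eq_quot lat_equiv}.
Definition torus_proj (x : 'rV[R]_d) : torus := \pi_torus x.
End Torus.

Section MergeTree.
Context {R : realType} {T : topologicalType} (L : R -> set T).
Definition mt_dom : set (T * R)%type := [set q | L q.2 q.1].
Definition mt_rel : rel (set_type mt_dom) := fun a b =>
  `[< (\val a).2 = (\val b).2 /\
      connected_component (L (\val a).2) (\val a).1 (\val b).1 >].
Lemma mt_rel_refl : reflexive mt_rel.
Proof.
move=> a; apply/asboolP; split => //; apply: connected_component_refl.
by have := set_valP a.
Qed.
Lemma mt_rel_sym : symmetric mt_rel.
Proof.
move=> a b; apply/asboolP/asboolP => -[e c]; split => //;
by rewrite -e; apply: connected_component_sym.
Qed.
Lemma mt_rel_trans : transitive mt_rel.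
Proof.
move=> b a c /asboolP[e1 c1] /asboolP[e2 c2]; apply/asboolP; split.
  by rewrite e1.
by apply: (connected_component_trans c1); rewrite e1.
Qed.
Canonical mt_equiv := EquivRel mt_rel mt_rel_refl mt_rel_sym mt_rel_trans.
Local Open Scope quotient_scope.
Definition mergetree := quotient_topology {eq_quot mt_equiv}.
Definition mt_height (A : mergetree) : R := (\val (repr A)).2.
Definition mt_comp (A : mergetree) : set T :=
  connected_component (L (mt_height A)) (\val (repr A)).1.
(* "B covers A" *)
Definition mt_covers (A B : mergetree) : Prop :=
  mt_height A <= mt_height B /\ mt_comp A `<=` mt_comp B.
End MergeTree.

(* ---------- monomials t R^a, encoded as pairs (t, a) ---------- *)
Definition mono_lt {R : realType} (m1 m2 : R * nat) : Prop :=
  (m1.2 < m2.2)%N \/ (m1.2 = m2.2 /\ m1.1 < m2.1).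
Definition mono_le {R : realType} (m1 m2 : R * nat) : Prop :=
  mono_lt m1 m2 \/ m1 = m2.

(* volume of the unit q-ball: nu_0 = 1, nu_1 = 2, nu_{q+2} = 2 pi/(q+2) nu_q *)
Fixpoint nu {R : realType} (q : nat) : R :=
  match q with
  | 0%N => 1
  | 1%N => 2
  | q'.+2 => 2 * pi / (q'.+2)%:R * nu q'
  end.

(* p-dimensional volume of the unit cell spanned by the rows of C *)
Definition lvol {R : realType} {p d : nat} (C : 'M[R]_(p, d)) : R :=
  Num.sqrt (\det (C *m C^T)).

Definition shift {R : realType} {d : nat} (S : set 'rV[R]_d) (u : 'rV[R]_d) :=
  [set x + u | x in S].

Section Complex.
Context {R : realType} {d : nat}.
Local Notation V := 'rV[R]_d.

Definition unit_cball (k : nat) : set 'rV[R]_k :=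
  [set x | \sum_(i < k) x ord0 i ^+ 2 <= 1].
Definition unit_sphere (k : nat) : set 'rV[R]_k :=
  [set x | \sum_(i < k) x ord0 i ^+ 2 = 1].
Arguments unit_cball : clear implicits.
Arguments unit_sphere : clear implicits.

Definition cell_homeo (k : nat) (sigma : set V) (f : 'rV[R]_k -> V) : Prop :=
  {within unit_cball k, continuous f} /\ f @` unit_cball k = sigma /\
  exists g : V -> 'rV[R]_k, {within sigma, continuous g} /\
    (forall x, unit_cball k x -> g (f x) = x).

Definition is_cell (k : nat) (sigma : set V) : Prop :=
  exists f, cell_homeo k sigma f.

Definition cell_complex (K : set (set V)) : Prop :=
  (forall sigma, K sigma -> exists k, is_cell k sigma) /\
  (forall sigma k f, K sigma -> cell_homeo k sigma f ->
     f @` unit_sphere k =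
     \bigcup_(tau in [set tau | K tau /\ tau `<=` f @` unit_sphere k /\
                      exists2 j, (j < k)%N & is_cell j tau]) tau) /\
  (forall sigma tau, K sigma -> K tau ->
     sigma `&` tau =
     \bigcup_(rho in [set rho | K rho /\ rho `<=` sigma /\ rho `<=` tau]) rho) /\
  (forall x : V, exists2 U, nbhs x U &
     finite_set [set sigma | K sigma /\ sigma `&` U !=set0]).

(* faces of tau in K are the cells of K contained in tau *)
Definition is_filter (K : set (set V)) (F : set V -> R) : Prop :=
  forall sigma tau, K sigma -> K tau -> sigma `<=` tau -> F sigma <= F tau.

Definition periodic_complex (B : 'M[R]_d) (K : set (set V)) : Prop :=
  forall sigma u, K sigma -> lat B u -> K (shift sigma u).

Definition periodic_filter (B : 'M[R]_d) (K : set (set V)) (F : set V -> R) :=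
  forall sigma u, K sigma -> lat B u -> F (shift sigma u) = F sigma.

Definition periodic_setting (B : 'M[R]_d) (K : set (set V)) (F : set V -> R) :=
  row_free B /\ cell_complex K /\ periodic_complex B K /\ is_filter K F /\
  periodic_filter B K F.

(* sublevel set at s of the quotient filter F/Lambda on K/Lambda *)
Definition qsublevel (B : 'M[R]_d) (K : set (set V)) (F : set V -> R) (s : R) :
  set (torus B) :=
  torus_proj B @` \bigcup_(sigma in [set sigma | K sigma /\ F sigma <= s]) sigma.

Definition shadow_monomial (B : 'M[R]_d) (Gamma : set (torus B)) : R * nat :=
  xget (0, 0%N) [set m | exists x : V, Gamma (torus_proj B x) /\
    let gamma := connected_component (torus_proj B @^-1` Gamma) x in
    exists p (C : 'M[R]_(p, d)), row_free C /\
      lat C = [set u | lat B u /\ shift gamma u = gamma] /\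
      m = (lvol C / lvol B * nu (d - p), (d - p)%N)].
End Complex.

Record pmt (R : realType) := PMT {
  pm_car : topologicalType;
  pm_dom : set pm_car;
  pm_h : pm_car -> R;
  pm_freq : pm_car -> R * nat;
  pm_cov : pm_car -> pm_car -> Prop }.     (* pm_cov A B : "B covers A" *)
Arguments pm_car {R}. Arguments pm_dom {R}. Arguments pm_h {R}.
Arguments pm_freq {R}. Arguments pm_cov {R}.

Definition MT {R : realType} {d : nat} (B : 'M[R]_d) (K : set (set 'rV[R]_d))
  (F : set 'rV[R]_d -> R) : pmt R :=
  @PMT R (mergetree (qsublevel B K F)) setT
    (@mt_height R _ (qsublevel B K F))
    (fun A => shadow_monomial B (mt_comp (qsublevel B K F) A))
    (@mt_covers R _ (qsublevel B K F)).

Record pdata (R : realType) (d : nat) := PData {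
  pd_B : 'M[R]_d; pd_K : set (set 'rV[R]_d); pd_F : set 'rV[R]_d -> R;
  pd_ok : periodic_setting pd_B pd_K pd_F }.
Arguments pd_B {R d}. Arguments pd_K {R d}. Arguments pd_F {R d}.

Definition MTof {R : realType} {d : nat} (D : pdata R d) : pmt R :=
  MT (pd_B D) (pd_K D) (pd_F D).

Section Interleaving.
Context {R : realType}.
Local Open Scope ereal_scope.

Definition compatible (e : R) (M M' : pmt R)
  (phi : pm_car M -> pm_car M') (psi : pm_car M' -> pm_car M) : Prop :=
  {within pm_dom M, continuous phi} /\ {within pm_dom M', continuous psi} /\
  (forall A, pm_dom M A -> pm_dom M' (phi A)) /\
  (forall A, pm_dom M' A -> pm_dom M (psi A)) /\
  (forall A, pm_dom M A -> pm_h M' (phi A) = (pm_h M A + e)%R) /\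
  (forall A, pm_dom M' A -> pm_h M (psi A) = (pm_h M' A + e)%R) /\
  (forall A, pm_dom M A -> pm_cov M A (psi (phi A))) /\
  (forall A, pm_dom M' A -> pm_cov M' A (phi (psi A))) /\
  (forall A, pm_dom M A -> mono_le (pm_freq M' (phi A)) (pm_freq M A)) /\
  (forall A, pm_dom M' A -> mono_le (pm_freq M (psi A)) (pm_freq M' A)).

Definition dI (M M' : pmt R) : \bar R :=
  ereal_inf [set e%:E | e in [set e : R | (0 <= e)%R /\
     exists phi psi, compatible e M M' phi psi]].

Definition subtree (M : pmt R) (G : pm_car M) : pmt R :=
  @PMT R (pm_car M) [set A | pm_dom M A /\ pm_cov M A G]
    (pm_h M) (pm_freq M) (pm_cov M).

Definition splinters (M' M : pmt R) : Prop :=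
  exists omega : pm_car M' -> pm_car M,
    {within pm_dom M', continuous omega} /\
    (forall A, pm_dom M' A -> pm_dom M (omega A)) /\
    pm_dom M `<=` omega @` pm_dom M' /\
    (forall A, pm_dom M' A -> pm_h M (omega A) = pm_h M' A) /\
    forall G, pm_dom M G ->
      let fib := [set A | pm_dom M' A /\ omega A = G] in
      exists n : nat, (fib #= `I_n)%card /\
        forall A B, fib A -> fib B ->
          dI (subtree M' A) (subtree M' B) = 0 /\
          omega @` pm_dom (subtree M' A) = pm_dom (subtree M G) /\
          omega @` pm_dom (subtree M' B) = pm_dom (subtree M G) /\
          pm_freq M' A = (((pm_freq M G).1 / n%:R)%R, (pm_freq M G).2) /\
          pm_freq M' B = (((pm_freq M G).1 / n%:R)%R, (pm_freq M G).2).

Definition pmt_equiv (d : nat) (M N : pmt R) : Prop :=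
  exists D : pdata R d, splinters (MTof D) M /\ splinters (MTof D) N.

Definition Jdist (d : nat) (M M' : pmt R) : \bar R :=
  ereal_inf [set x | exists (k : nat) (Ms Ms' : nat -> pdata R d),
    (0 < k)%N /\ pmt_equiv d (MTof (Ms 0%N)) M /\
    pmt_equiv d (MTof (Ms' k.-1)) M' /\
    (forall i, (i.+1 < k)%N -> pmt_equiv d (MTof (Ms' i)) (MTof (Ms i.+1))) /\
    x = \sum_(i < k) dI (MTof (Ms i)) (MTof (Ms' i))].

Definition supnorm {d : nat} (K : set (set 'rV[R]_d)) (F G : set 'rV[R]_d -> R)
  : \bar R :=
  (* sup over sigma in K of |F sigma - G sigma|; the extra 0 only matters
     for the degenerate case K = set0, where the sup-norm is 0 *)
  ereal_sup ([set 0] `|` [set (`|F sigma - G sigma|%R)%:E | sigma in K]).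
End Interleaving.

(* Main.v *)
From Pilot Require Import Defs.
From HB Require Import structures.
From mathcomp Require Import all_boot all_order all_algebra generic_quotient.
From mathcomp Require Import all_classical all_reals all_analysis.
Import Order.TTheory GRing.Theory Num.Theory numFieldNormedType.Exports.
Local Open Scope classical_set_scope.
Local Open Scope ring_scope.
From mathcomp Require Import zify.
From mathcomp Require Import ring lra.
Set Warnings "-notation-overridden,-ambiguous-paths,-deprecated".

Section Lat.
Context {R : realType} {d : nat}.
Local Notation V := 'rV[R]_d.

Lemma lat_row {p} (C : 'M[R]_(p, d)) i : lat C (row i C).
Proof.
exists (fun j => (j == i)%:Z); rewrite (bigD1 i) //= eqxx mulr1z scale1r big1 ?addr0 //.
by move=> j /negbTE ->; rewrite mulr0z scale0r.
Qed.

Lemma lat_sub_mx {p p'} (C : 'M[R]_(p, d)) (C' : 'M[R]_(p', d)) :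
  lat C `<=` lat C' -> exists M : 'M[int]_(p, p'), C = map_mx intr M *m C'.
Proof.
move=> sub.
have /choice [Z hZ] : forall i, exists z : 'I_p' -> int,
    row i C = \sum_j (z j)%:~R *: row j C'.
  by move=> i; have [z ->] := sub _ (lat_row C i); exists z.
exists (\matrix_(i, j) Z i j); apply/row_matrixP => i.
by rewrite row_mul mulmx_sum_row hZ; apply: eq_bigr => j _; rewrite !mxE.
Qed.

Lemma sqrt_mono (x y : R) : x <= y -> Num.sqrt x <= Num.sqrt y.
Proof.
move=> xy; have [x0|x0] := lerP x 0.
  by rewrite ler0_sqrtr // sqrtr_ge0.
by rewrite ler_sqrt // ltW // (lt_le_trans x0 xy).
Qed.

Lemma lvol_mono {p} (C C' : 'M[R]_(p, d)) (M : 'M[int]_p) :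
  C = map_mx intr M *m C' -> row_free C -> lvol C' <= lvol C.
Proof.
move=> eC fC; rewrite /lvol.
have [D0|D0] := lerP (\det (C' *m C'^T)) 0.
  by rewrite ler0_sqrtr // sqrtr_ge0.
apply: sqrt_mono.
have -> : C *m C^T = map_mx intr M *m (C' *m C'^T) *m (map_mx intr M)^T.
  by rewrite eC trmx_mul !mulmxA.
rewrite !det_mulmx det_tr det_map_mx.
have Mu : row_free (map_mx intr M : 'M[R]_p).
  rewrite /row_free; apply/eqP/anti_leq.
  rewrite rank_leq_row /=.
  by move: fC; rewrite /row_free => /eqP {1}<-; rewrite eC mxrankM_maxl.
move: Mu; rewrite row_free_unit unitmxE det_map_mx unitfE intr_eq0 => Mn0.
set D := \det (C' *m C'^T); set m := \det M.
have m2 : 1 <= (m%:~R : R) * m%:~R.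
  rewrite -intrM ler1z; have : (1 <= `|m|)%R by rewrite -(add0r 1) lezD1 normr_gt0.
  move=> h; have := ler_pM ler01 ler01 h h; rewrite mulr1 -normrM.
  by rewrite ger0_norm // -expr2 sqr_ge0.
by rewrite mulrC mulrA -[leLHS]mul1r ler_wpM2r // ?ltW //.

Qed.

Lemma nu_ge0 q : 0 <= (nu q : R).
Proof.
suff : 0 <= (nu q : R) /\ 0 <= (nu q.+1 : R) by case.
elim: q => [|q [h1 h2]]; first by split => //=; rewrite ler0n.
split => //=; rewrite mulr_ge0 // divr_ge0 ?ler0n // mulr_ge0 // ?ler0n //.
exact: pi_ge0.
Qed.

Definition mon (B : 'M[R]_d) {p} (C : 'M[R]_(p, d)) : R * nat :=
  (lvol C / lvol B * nu (d - p), (d - p)%N).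

Lemma mon_cmp (B : 'M[R]_d) p p' (C : 'M[R]_(p, d)) (C' : 'M[R]_(p', d)) :
  row_free C -> row_free C' -> lat C `<=` lat C' -> mono_le (mon B C') (mon B C).
Proof.
move=> fC fC' sub; have [M eM] := lat_sub_mx C C' sub.
have pp' : (p <= p')%N.
  move: fC fC'; rewrite /row_free => /eqP <- /eqP <-.
  by rewrite eM mxrankM_maxr.
have p'd : (p' <= d)%N.
  by move: fC'; rewrite /row_free => /eqP <-; rewrite rank_leq_col.
move: pp'; rewrite leq_eqVlt => /orP [/eqP epp|ltp]; last first.
  by left; left => /=; lia.
subst p'.
have le : (mon B C').1 <= (mon B C).1.
  rewrite /mon /= ler_wpM2r ?nu_ge0 // ler_wpM2r ?invr_ge0 ?sqrtr_ge0 //.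
  exact: lvol_mono C C' M eM fC.
move: le; rewrite le_eqVlt => /orP [/eqP e|lt].
  by right; rewrite [LHS]surjective_pairing e.
by left; right.
Qed.
End Lat.

Section Free.
Context {R : realType} {d : nat} (B : 'M[R]_d) (hB : B \in unitmx).
Local Notation V := 'rV[R]_d.

Definition subgrp (S : set V) := S 0 /\ forall u v, S u -> S v -> S (u - v).

Lemma subgrpN S v : subgrp S -> S v -> S (- v).
Proof. by move=> [S0 SB] Sv; rewrite -sub0r; apply: SB. Qed.
Lemma subgrpD S u v : subgrp S -> S u -> S v -> S (u + v).
Proof. by move=> sg Su Sv; rewrite -[v]opprK; apply: sg.2 => //; apply: subgrpN. Qed.
Lemma subgrpZ S v (z : int) : subgrp S -> S v -> S ((z%:~R : R) *: v).
Proof.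
move=> sg Sv; have hn : forall n, S (v *+ n).
  by elim=> [|n IH]; [rewrite mulr0n; exact: sg.1|rewrite mulrS; apply: subgrpD].
rewrite scaler_int; case: z => n; first exact: hn.
by rewrite NegzE mulrNz; apply: subgrpN => //; exact: hn.
Qed.
Lemma subgrp_sum S n (F : 'I_n -> V) : subgrp S -> (forall i, S (F i)) ->
  S (\sum_(i < n) F i).
Proof.
move=> sg hF; elim/big_ind: _ => //; first exact: sg.1.
by move=> x y; apply: subgrpD.
Qed.

Definition coord (v : V) := v *m invmx B.

Lemma coord_lat v : lat B v -> exists z : 'I_d -> int, forall j, coord v 0 j = (z j)%:~R.
Proof.
move=> [z ->]; exists z => j.
have -> : \sum_(i < d) (z i)%:~R *: row i B = (\row_i ((z i)%:~R : R)) *m B.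
  by rewrite mulmx_sum_row; apply: eq_bigr => i _; rewrite mxE.
by rewrite /coord mulmxK // mxE.
Qed.

Lemma coord_sum n (a : 'I_n -> R) (x : 'I_n -> V) j :
  coord (\sum_(i < n) a i *: x i) 0 j = \sum_(i < n) a i * coord (x i) 0 j.
Proof.
by rewrite /coord mulmx_suml summxE; apply: eq_bigr => i _; rewrite -scalemxAl mxE.
Qed.

Lemma coordB u v j : coord (u - v) 0 j = coord u 0 j - coord v 0 j.
Proof. by rewrite /coord mulmxBl !mxE. Qed.
Lemma coordZ a u j : coord (a *: u) 0 j = a * coord u 0 j.
Proof. by rewrite /coord -scalemxAl !mxE. Qed.

Definition zspan (s : seq V) : set V :=
  [set v | exists z : nat -> int, v = \sum_(i < size s) (z i)%:~R *: s`_i].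
Definition rindep (s : seq V) := forall a : nat -> R,
  \sum_(i < size s) a i *: s`_i = 0 -> forall i, (i < size s)%N -> a i = 0.

Lemma mem_zspan s i : (i < size s)%N -> zspan s s`_i.
Proof.
move=> hi; exists (fun j => (j == i)%:Z).
rewrite (bigD1 (Ordinal hi)) //= eqxx mulr1z scale1r big1 ?addr0 //.
move=> j /= hj; have -> : (j == i :> nat) = false.
  by apply/negbTE; move: hj; apply: contra => /eqP e; apply/eqP/val_inj.
by rewrite mulr0z scale0r.
Qed.

Lemma free_sub n : forall S, subgrp S -> S `<=` lat B ->
  (forall v, S v -> forall j : 'I_d, (n <= j)%N -> coord v 0 j = 0) ->
  exists s, rindep s /\ zspan s = S.
Proof.
elim: n => [|n IH] S sg sl hc.
  exists [::]; split; first by move=> a _ i.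
  apply/seteqP; split => v /=.
    by move=> [z ->]; rewrite big_ord0; exact: sg.1.
  move=> Sv; exists (fun=> 0); rewrite big_ord0.
  have c0 : coord v = 0 by apply/rowP => j; rewrite [RHS]mxE; exact: hc.
  by rewrite -[v](mulmxKV hB) -/(coord v) c0 mul0mx.
have [nd|dn] := ltnP n d; last first.
  apply: IH => // v Sv j nj; exfalso; have := ltn_ord j; lia.
set jn := Ordinal nd.
have [all0|] := pselect (forall v, S v -> coord v 0 jn = 0).
  apply: IH => // v Sv j; rewrite leq_eqVlt => /orP [/eqP e|lt]; last exact: hc.
  have -> : j = jn by apply: val_inj; rewrite /= e.
  exact: all0.
move/existsNP => [v0 /not_implyP [Sv0 nz]].
have [z0 hz0] := coord_lat _ (sl _ Sv0).
pose P := fun k : nat => `[< (0 < k)%N /\ exists v, S v /\ coord v 0 jn = k%:R >].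
have exP : exists k, P k.
  have := hz0 jn; case: (z0 jn) => k hk.
    exists k; apply/asboolP; split; last by exists v0; split => //; rewrite hk.
    by case: k hk => // hk; exfalso; apply: nz; rewrite hk mulr0z.
  exists k.+1; apply/asboolP; split => //; exists (- v0); split.
    exact: subgrpN.
  by rewrite -sub0r coordB hk /coord mul0mx mxE sub0r NegzE mulrNz opprK.
case: (ex_minnP exP) => g /asboolP [g0 [w [Sw cw]]] gmin.
pose S0 := [set v | S v /\ coord v 0 jn = 0].
have sg0 : subgrp S0.
  split; first by split; [exact: sg.1|rewrite /coord mul0mx mxE].
  by move=> u v [Su cu] [Sv cv]; split; [exact: sg.2|rewrite coordB cu cv subr0].
have [s0 [ind0 span0]] : exists s, rindep s /\ zspan s = S0.
  apply: IH => //; first by move=> v [Sv _]; exact: sl.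
  move=> v [Sv cv] j; rewrite leq_eqVlt => /orP [/eqP e|lt]; last exact: hc.
  by have -> : j = jn by apply: val_inj; rewrite /= e.
have s0S0 : forall i, (i < size s0)%N -> S0 s0`_i.
  by move=> i hi; rewrite -span0; exact: mem_zspan.
have gn0 : (g%:R : R) != 0 by rewrite pnatr_eq0 -lt0n.
exists (w :: s0); split.
  move=> a; rewrite big_ord_recl /= => ha.
  have a0 : a 0%N = 0.
    have := congr1 (fun x => coord x 0 jn) ha.
    have -> : coord 0 0 jn = 0 by rewrite /coord mul0mx mxE.
    rewrite /= /coord mulmxDl -/(coord _) -/(coord _) mxE coordZ cw coord_sum.
    rewrite big1 ?addr0; last first.
      by move=> i _; rewrite /bump /= (s0S0 _ (ltn_ord i)).2 mulr0.
    by move/eqP; rewrite mulf_eq0 (negbTE gn0) orbF => /eqP.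
  move: ha; rewrite a0 scale0r add0r => ha.
  have := ind0 (fun i => a i.+1) ha => h [|i] hi //.
  exact: h.
apply/seteqP; split => v /=.
  move=> [z ->]; apply: subgrp_sum => // i; apply: subgrpZ => //.
  case: i => [[|i]] hi //= ; exact: (s0S0 i hi).1.
move=> Sv; have [zv hzv] := coord_lat _ (sl _ Sv).
set m := zv jn.
pose q := (m %/ g)%Z; pose r := (m %% g)%Z.
pose v' := v - (q%:~R : R) *: w.
have Sv' : S v' by apply: sg.2 => //; exact: subgrpZ.
have cv' : coord v' 0 jn = r%:~R.
  rewrite coordB coordZ cw hzv -/m {1}(divz_eq m g) -/q -/r intrD intrM.
  have -> : ((g%:Z)%:~R : R) = g%:R by [].
  by rewrite addrAC subrr add0r.
have r0 : r = 0.
  have rge : (0 <= r)%R by rewrite modz_ge0 // -lt0n.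
  have rlt : (r < g%:Z)%R by rewrite ltz_pmod.
  apply/eqP; apply: contraT => rn0.
  have Pr : P `|r|%N.
    apply/asboolP; split; first by rewrite absz_gt0.
    by exists v'; split => //; rewrite cv' -[r in LHS]gez0_abs.
  have := gmin _ Pr; rewrite leqNgt => /negbTE <-.
  by rewrite -ltz_nat gez0_abs.
have [z' ev'] : zspan s0 v' by rewrite span0; split => //; rewrite cv' r0.
exists (fun i => if i is i'.+1 then z' i' else q).
by rewrite big_ord_recl /= -ev' /v' addrC subrK.
Qed.

Lemma lat_basis S : subgrp S -> S `<=` lat B ->
  exists p (C : 'M[R]_(p, d)), row_free C /\ lat C = S.
Proof.
move=> sg sl; have [s [ind span]] : exists s, rindep s /\ zspan s = S.
  by apply: (free_sub d) => // v Sv j dj; exfalso; have := ltn_ord j; lia.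
pose C : 'M[R]_(size s, d) := \matrix_(i < size s) s`_i.
exists (size s), C; split.
  apply: inj_row_free => v; rewrite mulmx_sum_row => h0.
  pose a := fun n => odflt 0 (omap (v 0) (insub n)).
  have ha : forall i : 'I_(size s), a i = v 0 i by move=> i; rewrite /a valK.
  have := ind a; rewrite (eq_bigr (fun i : 'I_(size s) => v 0 i *: row i C)); last first.
    by move=> i _; rewrite ha rowK.
  move=> /(_ h0) h; apply/rowP => i; rewrite mxE -ha; apply: h; exact: ltn_ord.
rewrite -span; apply/seteqP; split => v /=.
  move=> [z ->]; exists (fun n => odflt 0 (omap z (insub n))).
  by apply: eq_bigr => i _; rewrite valK rowK.
move=> [z ->]; exists (fun i => z i).
by apply: eq_bigr => i _; rewrite rowK.
Qed.
End Free.

Local Open Scope quotient_scope.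

Lemma comp_mono {T : topologicalType} (A B : set T) x : A `<=` B ->
  connected_component A x `<=` connected_component B x.
Proof.
move=> AB; have [Ax|nAx] := pselect (A x); last by rewrite connected_component_out.
apply: connected_component_max; first exact: connected_component_refl.
  by apply: subset_trans AB; exact: connected_component_sub.
exact: component_connected.
Qed.

Section MTbasic.
Context {R : realType} {T : topologicalType} (L : R -> set T).
Lemma mt_piP (a b : set_type (mt_dom L)) :
  (\pi_(mergetree L) a = \pi_(mergetree L) b) <-> mt_rel L a b.
Proof. split; [move=> h; apply/(@eqmodP _ (mt_equiv L)); exact: h|move=> /(@eqmodP _ (mt_equiv L)); exact]. Qed.
Lemma repr_rel (a : set_type (mt_dom L)) : mt_rel L (repr (\pi_(mergetree L) a)) a.
Proof. by apply/mt_piP; rewrite reprK. Qed.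
Lemma mt_height_pi a : mt_height L (\pi_(mergetree L) a) = (\val a).2.
Proof. by have /asboolP [] := repr_rel a. Qed.
Lemma mt_comp_pi a : mt_comp L (\pi_(mergetree L) a) = connected_component (L (\val a).2) (\val a).1.
Proof.
have /asboolP [h c] := repr_rel a; rewrite /mt_comp /mt_height h.
by apply: same_connected_component; rewrite -h.
Qed.
Lemma mt_covers_refl A : mt_covers L A A.
Proof. by split. Qed.
End MTbasic.

Section MTmap.
Context {R : realType} {T : topologicalType} (L1 L2 : R -> set T) (e : R)
  (sub : forall s x, L1 s x -> L2 (s + e) x).

Definition shf (a : set_type (mt_dom L1)) : set_type (mt_dom L2) :=
  @SigSub _ _ (mt_dom L2) ((\val a).1, (\val a).2 + e)
    (mem_set (@sub (\val a).2 (\val a).1 (set_valP a))).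

Lemma shf_rel a b : mt_rel L1 a b -> mt_rel L2 (shf a) (shf b).
Proof.
move/asboolP => [h c]; apply/asboolP; split; first by rewrite /= h.
by apply: comp_mono c => x; apply: sub.
Qed.

Definition mphi (A : mergetree L1) : mergetree L2 := \pi_(mergetree L2) (shf (repr A)).

Lemma mphi_pi a : mphi (\pi_(mergetree L1) a) = \pi_(mergetree L2) (shf a).
Proof. by apply/mt_piP; apply: shf_rel; exact: repr_rel. Qed.

Lemma shift2_continuous : continuous (fun p : T * R => (p.1, p.2 + e)).
Proof.
case=> a b W /= [[U V]] [/= Ua Vb] UVW.
have cb : (fun s : R => s + e) @ b --> b + e by apply: cvgD; [exact: cvg_id|exact: cvg_cst].
exists (U, (fun s => s + e) @^-1` V); first by split => //; exact: cb.
by case=> x y [/= Ux Vy]; apply: UVW; split.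
Qed.

Lemma shf_continuous : continuous shf.
Proof.
apply: (@continuous_comp_initial _ _ _ set_val).
have -> : set_val \o shf = (fun p : T * R => (p.1, p.2 + e)) \o set_val by [].
move=> x; apply: continuous_comp; first exact: initial_continuous.
exact: shift2_continuous.
Qed.

Lemma mphi_continuous : continuous mphi.
Proof.
have -> : mphi = (\pi_(mergetree L2) \o shf) \o repr by [].
apply: repr_comp_continuous.
  by move=> x; apply: continuous_comp; [exact: shf_continuous|exact: pi_continuous].
move=> a b /eqP /mt_piP h; apply/eqP/mt_piP; exact: shf_rel.
Qed.

Lemma mphi_height A : mt_height L2 (mphi A) = mt_height L1 A + e.
Proof. by rewrite /mphi mt_height_pi. Qed.

Lemma mphi_comp A : mt_comp L1 A `<=` mt_comp L2 (mphi A).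
Proof.
rewrite /mphi mt_comp_pi /= /mt_comp /mt_height.
by apply: comp_mono => x; apply: sub.
Qed.
End MTmap.

Section Ball.
Context {R : realType}.

Lemma sum_sq_ge0 k (x : 'rV[R]_k) : 0 <= \sum_(i < k) x ord0 i ^+ 2.
Proof. by apply: sumr_ge0 => i _; exact: sqr_ge0. Qed.

Lemma ball_entry {k} {x : 'rV[R]_k} i : unit_cball k x -> `|x ord0 i| <= 1.
Proof.
rewrite /unit_cball /= (bigD1 i) //= => h.
have h2 : x ord0 i ^+ 2 <= 1.
  apply: le_trans h; rewrite lerDl; apply: sumr_ge0 => j _; exact: sqr_ge0.
rewrite ler_norml; apply/andP; split; nra.
Qed.

Lemma ball_compact k : compact (@unit_cball R k).
Proof.
apply: (@bounded_closed_compact R).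
  rewrite /= /bounded_near; near=> M => x Bx /=.
  rewrite /Num.norm /= mx_normrE; apply: bigmax_le => //=.
  move=> [i j] _ /=; rewrite (ord1 i); apply: le_trans (ball_entry j Bx) _.
  by near: M; apply: nbhs_pinfty_ge; rewrite num_real.
change (closed ((fun x : 'rV[R]_k => \sum_(i < k) x ord0 i ^+ 2) @^-1` [set r : R | r <= 1])).
apply: preimage_closed; last exact: closed_le.
move=> x _; apply: (@continuous_big _ _ +%R 0 xpredT add_continuous) => i _.
move=> y; apply: (@continuous_comp _ _ _ (fun M : 'rV[R]_k => M ord0 i) (fun r : R => r ^+ 2)); first exact: coord_continuous.
exact: exprn_continuous.
Unshelve. all: by end_near. Qed.

Lemma ball_connected k : connected (@unit_cball R k).
Proof.
have -> : unit_cball k = \bigcup_(x in unit_cball k)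
    ((fun t : R => t *: x) @` `[0, 1]%classic).
  apply/seteqP; split => y.
    move=> By; exists y => //; exists 1; last by rewrite scale1r.
    by rewrite /= in_itv /= ler01 lexx.
  move=> [x Bx [t]]; rewrite /= in_itv /= => /andP [t0 t1] <-.
  rewrite /unit_cball /=.
  under eq_bigr do rewrite mxE exprMn.
  rewrite -mulr_sumr; apply: le_trans (_ : t ^+ 2 * 1 <= 1).
    by apply: ler_wpM2l => //; exact: sqr_ge0.
  by rewrite mulr1; nra.
apply: bigcup_connected.
  exists 0 => x Bx; exists 0; last by rewrite scale0r.
  by rewrite /= in_itv /= lexx ler01.
move=> x _; apply: connected_continuous_connected; first exact: segment_connected.
apply: continuous_subspaceT => t; exact: scalel_continuous.
Qed.
End Ball.

Local Open Scope quotient_scope.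

Section TorusLemmas.
Context {R : realType} {d : nat} (B : 'M[R]_d).
Local Notation V := 'rV[R]_d.
Local Notation proj := (torus_proj B).
Local Notation dshift := Pilot.Defs.shift.

Lemma cell_cc {K : set (set V)} {s} : cell_complex K -> K s -> closed s /\ connected s.
Proof.
move=> [c1 _] Ks; have [k [f [cf [img _]]]] := c1 s Ks; rewrite -img; split.
  apply: compact_closed; first exact: norm_hausdorff.
  exact: continuous_compact cf (ball_compact k).
exact: connected_continuous_connected (ball_connected k) cf.
Qed.

Lemma proj_eqP x y : proj x = proj y <-> lat B (x - y).
Proof.
split => [h|h].
  have /(@eqmodP _ (lat_equiv B) x y) : x = y %[mod_eq lat_equiv B] by exact: h.
  by move/asboolP.
have h' : lat_rel B x y by apply/asboolP.
by move: h' => /(@eqmodP _ (lat_equiv B) x y); exact.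
Qed.

Lemma latN {u} : lat B u -> lat B (- u).
Proof. by move=> h; rewrite -sub0r; apply: latB => //; exact: lat0. Qed.
Lemma latD {u v} : lat B u -> lat B v -> lat B (u + v).
Proof. by move=> hu hv; rewrite -[v]opprK; apply: latB => //; exact: latN. Qed.

Lemma trans_continuous (u : V) : continuous (fun y : V => y + u).
Proof. move=> y. have := @cvgD R V _ (nbhs y) _ id (fun=> u) y u cvg_id (cvg_cst u). exact. Qed.

Lemma proj_open (W : set V) : open W -> open (proj @` W).
Proof.
move=> oW; rewrite /open /= /quotient_open.
have -> : \pi_(torus B) @^-1` (proj @` W) =
    \bigcup_(u in lat B) ((fun y => y + - u) @^-1` W).
  apply/seteqP; split => y /=.
    move=> [w Ww /proj_eqP h]; exists (y - w); first by rewrite -opprB; exact: latN.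
    by rewrite /= opprB addrC subrK.
  move=> [u lu /= Wyu]; exists (y - u) => //; apply/proj_eqP.
  by rewrite addrAC subrr add0r; exact: latN.
apply: bigcup_open => u _; apply: open_comp => // y _.
exact: trans_continuous.
Qed.

Lemma shiftP (S : set V) u y : dshift S u y <-> S (y - u).
Proof.
split; first by move=> [x Sx <-]; rewrite addrK.
by move=> h; exists (y - u) => //; rewrite subrK.
Qed.

Lemma shift_shift (S : set V) u v : dshift (dshift S u) v = dshift S (u + v).
Proof.
apply/seteqP; split => y.
  by move/shiftP/shiftP => h; apply/shiftP; rewrite opprD addrA addrAC.
by move/shiftP => h; apply/shiftP/shiftP; move: h; rewrite opprD addrA addrAC.
Qed.

Lemma shift0 (S : set V) : dshift S 0 = S.
Proof. by apply/seteqP; split => y; [move/shiftP; rewrite subr0|move=> h; apply/shiftP; rewrite subr0]. Qed.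

Lemma shift_comp_sub (Y : set V) u x : (forall z, Y z -> Y (z + u)) ->
  dshift (connected_component Y x) u `<=` connected_component Y (x + u).
Proof.
move=> hY; have [Yx|nYx] := pselect (Y x); last first.
  by rewrite connected_component_out // => y /shiftP.
apply: connected_component_max.
- by apply/shiftP; rewrite addrK; exact: connected_component_refl.
- by move=> y /shiftP /connected_component_sub /hY; rewrite subrK.
- apply: connected_continuous_connected; first exact: component_connected.
  by apply: continuous_subspaceT; exact: trans_continuous.
Qed.

Lemma comp_shift (Y : set V) u x : (forall z, Y (z + u) <-> Y z) ->
  connected_component Y (x + u) = dshift (connected_component Y x) u.
Proof.
move=> hY; apply/seteqP; split; last by apply: shift_comp_sub => z /hY.
move=> y h; apply/shiftP.
have := @shift_comp_sub Y (- u) (x + u).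
rewrite addrK; apply.
  by move=> z Yz; apply/hY; rewrite subrK.
by apply/shiftP; rewrite opprK subrK.
Qed.

Definition Stab (S : set V) := [set u | lat B u /\ dshift S u = S].

Lemma stab_subgrp S : subgrp (Stab S).
Proof.
split; first by split; [exact: lat0|exact: shift0].
move=> u v [lu su] [lv sv]; split; first exact: latB.
have sNv : dshift S (- v) = S by rewrite -{1}sv shift_shift subrr shift0.
by rewrite -shift_shift su.
Qed.

Lemma stab_shift S u : Stab (dshift S u) = Stab S.
Proof.
have e : forall T, dshift (dshift T u) (- u) = T.
  by move=> T; rewrite shift_shift subrr shift0.
apply/seteqP; split => v [lv h]; split => //.
  by rewrite -{1}(e S) shift_shift addrC -shift_shift h e.
by rewrite shift_shift addrC -shift_shift h.
Qed.

Section Cx.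
Context (K : set (set V)) (F : set V -> R) (cK : cell_complex K)
  (pK : periodic_complex B K) (pF : periodic_filter B K F).

Definition X s : set V := \bigcup_(sg in [set sg | K sg /\ F sg <= s]) sg.

Lemma X_inv s {x u} : lat B u -> X s x -> X s (x + u).
Proof.
move=> lu [sg [Ksg Fsg] sgx]; exists (dshift sg u); last by exists x.
by split; [exact: pK|rewrite pF].
Qed.

Lemma X_inv_iff s x u : lat B u -> X s (x + u) <-> X s x.
Proof.
move=> lu; split; last exact: X_inv.
by move=> h; have := X_inv s (latN lu) h; rewrite addrK.
Qed.

Lemma X_sat s x : qsublevel B K F s (proj x) -> X s x.
Proof.
move=> [y Xy /proj_eqP h]; have := X_inv s (latN h) Xy.
by rewrite opprB addrC subrK.
Qed.

Lemma X_loc s x : X s x -> exists Op, open Op /\ Op x /\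
  Op `&` X s `<=` connected_component (X s) x.
Proof.
move=> Xx; have [U Ux finU] := cK.2.2.2 x.
pose Fin := [set sg | (K sg /\ sg `&` U !=set0) /\ ~ sg x].
have finF : finite_set Fin by apply: sub_finite_set finU => sg [].
pose C := \bigcup_(sg in Fin) sg.
have clC : closed C.
  apply: closed_bigcup => // sg [[Ksg _] _]; exact: (cell_cc cK Ksg).1.
have nCx : ~ C x by move=> [sg [_ nsx] sx].
have : nbhs x (U `&` ~` C).
  apply: filterI => //; apply: open_nbhs_nbhs; split => //.
  by rewrite openC.
rewrite nbhsE /= => -[Op [oOp Opx] OpW]; exists Op; split => //; split => //.
move=> z [Opz [sg [Ksg Fsg] sgz]].
have [sgx|nsgx] := pselect (sg x); last first.
  exfalso; have [_ nCz] := OpW _ Opz; apply: nCz; exists sg => //.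
  by split => //; split => //; exists z; split => //; exact: (OpW _ Opz).1.
apply: (connected_component_max sgx) => //.
  by move=> w sgw; exists sg.
exact: (cell_cc cK Ksg).2.
Qed.
End Cx.
End TorusLemmas.

Local Open Scope quotient_scope.

Lemma sep_lemma {T : topologicalType} (A O1 O2 : set T) : connected A ->
  open O1 -> open O2 -> A `<=` O1 `|` O2 -> A `&` O1 `&` O2 = set0 ->
  A `<=` O1 \/ A `<=` O2.
Proof.
move=> cA oO1 oO2 sA dA.
have hs : separated (A `&` O1) (A `&` O2).
  split; apply/seteqP; split => // p.
    move=> [cp [Ap p2]]; have [q [[Aq q1] q2]] := cp O2 (open_nbhs_nbhs (conj oO2 p2)).
    by have : (A `&` O1 `&` O2) q by []; rewrite dA.
  move=> [[Ap p1] cp]; have [q [[Aq q2] q1]] := cp O1 (open_nbhs_nbhs (conj oO1 p1)).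
  by have : (A `&` O1 `&` O2) q by []; rewrite dA.
have hsub : A `<=` (A `&` O1) `|` (A `&` O2).
  by move=> p Ap; have [p1|p2] := sA p Ap; [left|right].
have [h|h] := connected_subset hs hsub cA.
- by left => p /h [].
- by right => p /h [].
Qed.

Section Cover.
Context {R : realType} {d : nat} (B : 'M[R]_d).
Local Notation V := 'rV[R]_d.
Local Notation proj := (torus_proj B).
Local Notation dshift := Pilot.Defs.shift.
Context (K : set (set V)) (F : set V -> R) (cK : cell_complex K)
  (pK : periodic_complex B K) (pF : periodic_filter B K F).

Local Notation qs s := (qsublevel B K F s).

Lemma PX s y : proj @^-1` (connected_component (qs s) y) `<=` X K F s.
Proof. by move=> z /connected_component_sub; apply: X_sat. Qed.

Lemma comp_P_X s y x : connected_component (qs s) y (proj x) ->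
  connected_component (proj @^-1` connected_component (qs s) y) x =
  connected_component (X K F s) x.
Proof.
move=> Gx; apply/seteqP; split; first by apply: comp_mono; exact: PX.
have Xx : X K F s x by exact: PX Gx.
apply: connected_component_max.
- exact: connected_component_refl.
- move=> z cz; rewrite /= (same_connected_component Gx).
  suff : proj @` connected_component (X K F s) x `<=`
         connected_component (qs s) (proj x) by apply; exists z.
  apply: connected_component_max.
  + by exists x => //; exact: connected_component_refl.
  + by move=> _ [w cw <-]; exists w => //; exact: connected_component_sub cw.
  + apply: connected_continuous_connected; first exact: component_connected.
    by apply: continuous_subspaceT; exact: pi_continuous.
- exact: component_connected.
Qed.

Lemma cover_lemma s y x1 x2 :
  connected_component (qs s) y (proj x1) ->
  connected_component (qs s) y (proj x2) ->
  exists u, lat B u /\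
    connected_component (X K F s) x2 = dshift (connected_component (X K F s) x1) u.
Proof.
set G := connected_component (qs s) y => G1 G2.
set Xs := X K F s.
have Xx1 : Xs x1 by exact: PX G1.
pose U := [set z | exists u, lat B u /\ connected_component Xs (x1 + u) z].
have hUc : forall z w, U z -> connected_component Xs z w -> U w.
  move=> z w [u [lu cz]] czw; exists u; split => //.
  by rewrite (same_connected_component cz).
have hUi : forall z v, U z -> lat B v -> U (z + v).
  move=> z v [u [lu cz]] lv; exists (u + v); split; first exact: latD.
  rewrite addrA comp_shift; last by move=> w; exact: (X_inv_iff B K F pK pF s w v lv).
  by apply/shiftP; rewrite addrK.
have hUp : forall z w, U z -> proj w = proj z -> U w.
  move=> z w Uz /proj_eqP h; have := hUi _ _ Uz h.
  by rewrite addrC subrK.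
have hUX : U `<=` Xs by move=> z [u [_ /connected_component_sub]].
have Ux1 : U x1.
  exists 0; split; first exact: lat0.
  by rewrite addr0; exact: connected_component_refl.
pose W1 := \bigcup_(Qo in [set Qo | open Qo /\ exists z, U z /\
   Qo `&` Xs `<=` connected_component Xs z]) Qo.
pose W2 := \bigcup_(Qo in [set Qo | open Qo /\ exists z, ~ U z /\
   Qo `&` Xs `<=` connected_component Xs z]) Qo.
have W1U : W1 `&` Xs `<=` U.
  by move=> w [[Qo [_ [z [Uz sub]]] Opw] Xw]; apply: (hUc z) => //; apply: sub.
have W2U : forall w, W2 w -> Xs w -> ~ U w.
  move=> w [Qo [_ [z [nUz sub]]] Opw] Xw Uw; apply: nUz.
  by apply: (hUc w) => //; apply: connected_component_sym; apply: sub.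
have XW : Xs `<=` W1 `|` W2.
  move=> z Xz; have [Qo [oOp [Opz sub]]] := @X_loc _ _ K F cK s z Xz.
  have [Uz|nUz] := pselect (U z).
    by left; exists Qo => //; split => //; exists z.
  by right; exists Qo => //; split => //; exists z.
have oO1 : open (proj @` W1).
  apply: proj_open; apply: bigcup_open => Qo [] //.
have oO2 : open (proj @` W2).
  apply: proj_open; apply: bigcup_open => Qo [] //.
have GX : forall t, G t -> exists z, Xs z /\ proj z = t.
  by move=> t /connected_component_sub [z Xz <-]; exists z.
have hsep := @sep_lemma _ G _ _ (@component_connected _ (qs s) y) oO1 oO2.
have [GO1|GO2] : G `<=` proj @` W1 \/ G `<=` proj @` W2.
- apply: hsep.
    move=> t Gt; have [z [Xz <-]] := GX t Gt.
    by case: (XW z Xz) => h; [left|right]; exists z.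
  apply/seteqP; split => // t [[Gt [w1 W1w1 e1]] [w2 W2w2 e2]].
  have Xw1 : Xs w1 by apply: (PX s y); rewrite /= e1.
  have Xw2 : Xs w2 by apply: (PX s y); rewrite /= e2.
  have Uw1 : U w1 by apply: W1U.
  by apply: (W2U w2) => //; apply: (hUp w1) => //; rewrite e1 e2.
- have [w1 W1w1 e1] := GO1 _ G2.
  have Xw1 : Xs w1 by apply: (PX s y); rewrite /= e1.
  have Uw1 : U w1 by apply: W1U.
  have [u [lu cu]] := hUp _ _ Uw1 (esym e1).
  exists u; split => //.
  rewrite -comp_shift; last by move=> w; exact: (X_inv_iff B K F pK pF s w u lu).
  by apply/esym/same_connected_component.
- exfalso; have [w2 W2w2 e2] := GO2 _ G1.
  have Xw2 : Xs w2 by apply: (PX s y); rewrite /= e2.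
  by apply: (W2U w2) => //; apply: (hUp x1) => //.
Qed.
End Cover.

Local Open Scope quotient_scope.

Section Shadow.
Context {R : realType} {d : nat} (B : 'M[R]_d) (hB : B \in unitmx).
Local Notation V := 'rV[R]_d.
Local Notation proj := (torus_proj B).
Local Notation dshift := Pilot.Defs.shift.

Lemma proj_inv (Y : set (torus B)) u z : lat B u -> (proj @^-1` Y) (z + u) <-> (proj @^-1` Y) z.
Proof.
move=> lu; have e : proj (z + u) = proj z by apply/proj_eqP; rewrite addrAC subrr add0r.
by rewrite /= e.
Qed.

Lemma stab_mono (Y Y' : set (torus B)) x : Y `<=` Y' -> Y (proj x) ->
  Stab B (connected_component (proj @^-1` Y) x) `<=`
  Stab B (connected_component (proj @^-1` Y') x).
Proof.
move=> YY Yx u [lu su]; split => //.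
have gg : connected_component (proj @^-1` Y) x `<=` connected_component (proj @^-1` Y') x.
  by apply: comp_mono => z /= /YY.
rewrite -comp_shift; last by move=> z; exact: proj_inv.
apply/esym/same_connected_component; apply: gg.
rewrite -su; apply/shiftP; rewrite addrK.
exact: connected_component_refl.
Qed.

Lemma shadow_spec (Y : set (torus B)) : Y !=set0 ->
  exists x p (C : 'M[R]_(p, d)), Y (proj x) /\ row_free C /\
    lat C = Stab B (connected_component (proj @^-1` Y) x) /\
    shadow_monomial B Y = mon B C.
Proof.
move=> [t Yt].
have ex : exists m, [set m | exists x : V, Y (proj x) /\
    let gamma := connected_component (proj @^-1` Y) x in
    exists p (C : 'M[R]_(p, d)), row_free C /\
      lat C = [set u | lat B u /\ dshift gamma u = gamma] /\
      m = (lvol C / lvol B * nu (d - p), (d - p)%N)] m.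
  have [p [C [fC lC]]] := lat_basis B hB _ (stab_subgrp B
     (connected_component (proj @^-1` Y) (repr t))) (fun u h => proj1 h).
  exists (mon B C), (repr t); split; first by rewrite /torus_proj reprK.
  by exists p, C.
have := xgetPex (0, 0%N) ex; rewrite -/(shadow_monomial B Y).
move=> [x [Yx [p [C [fC [lC e]]]]]].
by exists x, p, C.
Qed.

Lemma shadow_mono (K : set (set V)) (F G : set V -> R) (cK : cell_complex K)
  (pK : periodic_complex B K) (pG : periodic_filter B K G) s s' y y' :
  connected_component (qsublevel B K F s) y `<=`
    connected_component (qsublevel B K G s') y' ->
  connected_component (qsublevel B K F s) y !=set0 ->
  mono_le (shadow_monomial B (connected_component (qsublevel B K G s') y'))
          (shadow_monomial B (connected_component (qsublevel B K F s) y)).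
Proof.
move=> sub ne.
have [x [p [C [Yx [fC [lC e]]]]]] := shadow_spec _ ne.
have ne' : connected_component (qsublevel B K G s') y' !=set0.
  by exists (proj x); apply: sub.
have [x' [p' [C' [Yx' [fC' [lC' e']]]]]] := shadow_spec _ ne'.
rewrite e e'; apply: mon_cmp => //.
rewrite lC lC'.
apply: subset_trans (stab_mono _ _ _ sub Yx) _.
have Yx2 := sub _ Yx.
rewrite (comp_P_X B K G pK pG s' y' x Yx2) (comp_P_X B K G pK pG s' y' x' Yx').
have [u [lu ->]] := cover_lemma B K G cK pK pG s' y' x x' Yx2 Yx'.
by rewrite stab_shift.
Qed.
End Shadow.

Local Open Scope quotient_scope.

Section Final.
Context {R : realType}.

Lemma dI_self (M : pmt R) : (forall A, pm_cov M A A) -> dI M M = 0%E.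
Proof.
move=> hc; apply/eqP; rewrite eq_le; apply/andP; split.
  apply: ereal_inf_lbound; exists 0 => //; split => //; exists id, id.
  do !split => //.
  - by apply: continuous_subspaceT => x; exact: cvg_id.
  - by apply: continuous_subspaceT => x; exact: cvg_id.
  - by move=> A _; rewrite addr0.
  - by move=> A _; rewrite addr0.
  - by move=> A _; right.
  - by move=> A _; right.
apply: le_ereal_inf_tmp => _ [e [e0 _] <-]; by rewrite lee_fin.
Qed.

Lemma splinters_refl (M : pmt R) : (forall A, pm_cov M A A) -> splinters M M.
Proof.
move=> hc; exists id; split.
  by apply: continuous_subspaceT => x; exact: cvg_id.
split => //; split; first by move=> x Mx; exists x.
split => // G MG; exists 1%N; split.
  have -> : [set A | pm_dom M A /\ id A = G] = [set G].
    by apply/seteqP; split => [A [_ ->]|A ->] //.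
  exact: card_set1.
move=> A B' [_ ->] [_ ->]; split.
  by rewrite /subtree dI_self.
rewrite image_id divr1 -surjective_pairing.
by do !split.
Qed.

Lemma pmt_equiv_refl d (D : pdata R d) : pmt_equiv d (MTof D) (MTof D).
Proof.
by exists D; split; apply: splinters_refl => A; exact: mt_covers_refl.
Qed.
End Final.

Theorem mainTheorem3 (R : realType) (d : nat) (B : 'M[R]_d)
  (K : set (set 'rV[R]_d)) (F G : set 'rV[R]_d -> R) :
  row_free B ->
  cell_complex K -> periodic_complex B K ->
  is_filter K F -> is_filter K G ->
  periodic_filter B K F -> periodic_filter B K G ->
  (dI (MT B K F) (MT B K G) <= supnorm K F G)%E /\
  (Jdist d (MT B K F) (MT B K G) <= supnorm K F G)%E.
Proof.
move=> fB cK pK fF fG pF pG.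
have hB : B \in unitmx by rewrite -row_free_unit.
have dIle : (dI (MT B K F) (MT B K G) <= supnorm K F G)%E.
  have S0 : (0 <= supnorm K F G)%E by apply: ereal_sup_ubound; left.
  have Sb : forall sg, K sg -> ((`|F sg - G sg|)%:E <= supnorm K F G)%E.
    by move=> sg Ksg; apply: ereal_sup_ubound; right; exists sg.
  move: S0 Sb; case: (supnorm K F G) => [e||] //= S0 Sb; last by rewrite leey.
  have e0 : 0 <= e by rewrite -lee_fin.
  have hb : forall sg, K sg -> `|F sg - G sg| <= e by move=> sg /Sb; rewrite lee_fin.
  have sub12 : forall s x, qsublevel B K F s x -> qsublevel B K G (s + e) x.
    move=> s x [z [sg [Ksg Fsg] sgz] <-]; exists z => //; exists sg => //; split => //.
    by have := hb sg Ksg; rewrite ler_norml => /andP [h1 h2]; lra.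
  have sub21 : forall s x, qsublevel B K G s x -> qsublevel B K F (s + e) x.
    move=> s x [z [sg [Ksg Fsg] sgz] <-]; exists z => //; exists sg => //; split => //.
    by have := hb sg Ksg; rewrite ler_norml => /andP [h1 h2]; lra.
  apply: ereal_inf_lbound; exists e => //; split => //.
  exists (mphi _ _ e sub12), (mphi _ _ e sub21).
  split; first by apply: continuous_subspaceT; exact: mphi_continuous.
  split; first by apply: continuous_subspaceT; exact: mphi_continuous.
  split => //; split => //.
  split; first by move=> A _; exact: mphi_height.
  split; first by move=> A _; exact: mphi_height.
  split.
    move=> A _; split; first by rewrite /= !mphi_height -addrA lerDl addr_ge0.
    by apply: subset_trans (mphi_comp _ _ _ _ _) (mphi_comp _ _ _ _ _).
  split.
    move=> A _; split; first by rewrite /= !mphi_height -addrA lerDl addr_ge0.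
    by apply: subset_trans (mphi_comp _ _ _ _ _) (mphi_comp _ _ _ _ _).
  split.
    move=> A _; apply: (shadow_mono B hB K F G cK pK pG); first exact: mphi_comp.
    exists (\val (repr A)).1; apply: connected_component_refl.
    exact: (set_valP (repr A)).
  move=> A _; apply: (shadow_mono B hB K G F cK pK pF); first exact: mphi_comp.
  exists (\val (repr A)).1; apply: connected_component_refl.
  exact: (set_valP (repr A)).
split => //.
pose DF := @PData R d B K F (conj fB (conj cK (conj pK (conj fF pF)))).
pose DG := @PData R d B K G (conj fB (conj cK (conj pK (conj fG pG)))).
apply: le_trans dIle.
apply: ereal_inf_lbound; exists 1%N, (fun=> DF), (fun=> DG); split => //.
split; first exact: pmt_equiv_refl.
split; first exact: pmt_equiv_refl.
by split => //; rewrite big_ord1.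
Qed.
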